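(* Let $X=X_1\times\cdots\times X_n$ be a finite product space, $\theta:X\to\mathbb{R}\cup\{-\infty\}$ a potential function with $Z=\sum_x\exp(\theta(x))>0$, and $p(x)=\exp(\theta(x))/Z$ the Gibbs distribution. Let $\{\gamma_i(x_i)\}_{i,\,x_i\in X_i}$ be i.i.d. random variables following the zero-mean Gumbel distribution. Consider the following procedure (one pass): for $j=1,\dots,n$, with $x_1,\dots,x_{j-1}$ already fixed, set for each $x_j\in X_j$ $$p_j(x_j)=\frac{\exp\big(E_\gamma\big[\max_{x_{j+1},\dots,x_n}\{\theta(x)+\sum_{i=j+1}^n\gamma_i(x_i)\}\big]\big)}{\exp\big(E_\gamma\big[\max_{x_j,\dots,x_n}\{\theta(x)+\sum_{i=j}^n\gamma_i(x_i)\}\big]\big)},$$ set $p_j(r)=1-\sum_{x_j}p_j(x_j)$ for an extra symbol $r$, and sample an element from $p_j(\cdot)$; if $r$ is sampled the pass rejects (and the algorithm restarts with $j=1$), otherwise the sampled $x_j$ is fixed and the iteration continues; if the pass reaches $j=n$ without rejection, it accepts and outputs $(x_1,\dots,x_n)$. Then for every $x\in X$, $$P\big[\text{the algorithm outputs }x\;\big|\;\text{the algorithm accepts}\big]=p(x).$$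
   Context: The zero-mean Gumbel distribution is the distribution with cumulative distribution function $F(t)=\exp(-\exp(-(t+c)))$, where $c$ is the Euler constant. The expectations $E_\gamma$ in $p_j$ are exact expectations over the Gumbel perturbations (the quantities $p_j(\cdot)$ are deterministic given $x_1,\dots,x_{j-1}$); the only randomness in the procedure is the sampling from $p_j(\cdot)$. *)

(* Defs.v *)
From HB Require Import structures.
From mathcomp Require Import all_boot all_order all_algebra.
From mathcomp Require Import all_classical all_reals all_analysis.
Set Implicit Arguments. Unset Strict Implicit. Unset Printing Implicit Defensive.
Import Order.TTheory GRing.Theory Num.Theory.
Import numFieldNormedType.Exports.
Local Open Scope classical_set_scope.
Local Open Scope ring_scope.

Definition euler_gamma {R : realType} : R :=
  limn (fun n : nat => \sum_(1 <= k < n.+1) (k%:R : R)^-1 - ln (n%:R : R)).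

Definition gumbel_cdf {R : realType} (t : R) : R :=
  expR (- expR (- (t + euler_gamma))).

Section gumbel_cumulative.
Context {R : realType}.

Let gumbel_nd : nondecreasing (@gumbel_cdf R).
Proof.
move=> x y xy; rewrite /gumbel_cdf ler_expR lerN2 ler_expR lerN2 lerD2r //.
Qed.

Let gumbel_rc : right_continuous (@gumbel_cdf R).
Proof.
apply: right_continuousW => x; rewrite /gumbel_cdf.
apply: continuous_comp; last exact: continuous_expR.
apply: continuousN; apply: continuous_comp; last exact: continuous_expR.
apply: continuousN; apply: continuousD; [exact: cvg_id | exact: cvg_cst].
Qed.

HB.instance Definition _ := isCumulative.Build R _ R (@gumbel_cdf R)
  gumbel_nd gumbel_rc.
End gumbel_cumulative.

Definition gumbel_law (R : realType) := lebesgue_stieltjes_measure (@gumbel_cdf R).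

Local Open Scope ereal_scope.

(* Exact expectation over independent Gumbel perturbations g : I -> R
   (one per index of the finite type I), as iterated integrals against the
   Gumbel law (i.e. integration against the product law). *)
Fixpoint iter_gumbel_E {R : realType} (I : finType) (s : seq I)
    (F : (I -> R) -> \bar R) (g : I -> R) : \bar R :=
  match s with
  | [::] => F g
  | k :: s' => \int[@gumbel_law R]_t
                 iter_gumbel_E s' F (fun i => if i == k then t else g i)
  end.

Definition gumbel_E {R : realType} (I : finType) (F : (I -> R) -> \bar R) : \bar R :=
  iter_gumbel_E (enum I) F (fun _ => 0%R).

Definition expE {R : realType} (x : \bar R) : R := fine (expeR x).

Section gibbs_sampling.
Context {R : realType} (n : nat) (X : 'I_n -> finType).

Definition prodX := {dffun forall i : 'I_n, X i}.
(* Indices (i, x_i) of the Gumbel perturbations gamma_i(x_i). *)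
Definition gidx := {i : 'I_n & X i}.

Variable theta : prodX -> \bar R.

Definition Zpart : R := (\sum_(y : prodX) expE (theta y))%R.
Definition gibbs (x : prodX) : R := (expE (theta x) / Zpart)%R.

(* M x m = E_gamma[ max_{y : y_i = x_i for i < m} theta(y) + sum_{i >= m} gamma_i(y_i) ]
   (0-indexed coordinates: the first m coordinates are fixed to those of x). *)
Definition Mpert (x : prodX) (m : nat) : \bar R :=
  gumbel_E (fun g : gidx -> R =>
    \big[maxe/-oo]_(y : prodX | [forall i : 'I_n, (i < m)%N ==> (y i == x i)])
      (theta y + (\sum_(i : 'I_n | (m <= i)%N) (g (Tagged X (y i)))%:E))).

(* p_j(x_j) at (0-indexed) step j, given the prefix x_0..x_{j-1} of x,
   where x_j is the j-th coordinate of x. *)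
Definition pstep (x : prodX) (j : nat) : R :=
  (expE (Mpert x j.+1) / expE (Mpert x j))%R.

(* Probability that one pass does not reject and outputs x. *)
Definition pass_prob (x : prodX) : R := (\prod_(j < n) pstep x j)%R.

Definition accept_prob : R := (\sum_(y : prodX) pass_prob y)%R.

(* P[algorithm outputs x | algorithm accepts]: passes are i.i.d. restarts,
   so this equals P[pass outputs x] / P[pass accepts]. *)
Definition cond_output_prob (x : prodX) : R := (pass_prob x / accept_prob)%R.

End gibbs_sampling.

(* Main.v *)
Require Import Defs.
From HB Require Import structures.
From mathcomp Require Import all_boot all_order all_algebra.
From mathcomp Require Import all_classical all_reals all_analysis.
From mathcomp Require Import ring lra.
From mathcomp Require Import measurable_realfun.
Import Order.TTheory GRing.Theory Num.Theory.

Module Part2.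
Import numFieldNormedType.Exports.
Import numFieldNormedType.Exports.
Local Open Scope ring_scope.
Local Open Scope classical_set_scope.
Local Open Scope ereal_scope.
Lemma integral_le_gen d (T: measurableType d) (R: realType) (mu : set T -> \bar R) D (f g : T -> \bar R) : (forall x, f x <= g x) -> \int[mu]_(x in D) f x <= \int[mu]_(x in D) g x.
Proof.
move=> fg.
have H: {in setT, forall x, (f \_ D) x <= (g \_ D) x}.
  by move=> y _; rewrite /patch; case: ifP.
rewrite /integral /=; apply: leeB.
- apply: le_ereal_sup => _ [h /= hf <-].
  exists h => //= x.
  apply: (le_trans (hf x)).
  apply: (funepos_le H); exact: in_setT.
- apply: le_ereal_sup => _ [h /= hf <-].
  exists h => //= x.
  apply: (le_trans (hf x)).
  apply: (funeneg_le H); exact: in_setT.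
Qed.
Local Close Scope ereal_scope.
Section S. Context {R : realType}.
Lemma gumbel_cvgy : (@gumbel_cdf R) @ +oo --> (1:R).
Proof.
have -> : (@gumbel_cdf R) = expR \o (fun x => - ((fun x => expR (- x)) \o (fun x => x + euler_gamma)) x).
  by apply/funext => x; rewrite /gumbel_cdf.
rewrite -expR0; apply: continuous_cvg; first exact: continuous_expR.
rewrite -oppr0; apply: cvgN.
apply: cvg_comp; last exact: cvgr_expR.
exact: cvg_addrr.
Qed.
Lemma gumbel_cvgNy : (@gumbel_cdf R) @ -oo --> (0:R).
Proof.
apply/cvgNy_compNP.
have -> : (@gumbel_cdf R \o -%R) = (fun x => expR (- x)) \o (fun x => expR (x - euler_gamma)).
  by apply/funext => x; rewrite /gumbel_cdf /= opprD opprK.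
apply: (cvg_comp _ _ _ (@cvgr_expR R)).
apply: (ger_cvgy _ (cvg_addrr (- euler_gamma))).
near=> x; apply: le_trans (expR_ge1Dx _); rewrite lerDr //.
Unshelve. all: end_near.
Qed.
Local Open Scope ereal_scope.
Lemma gumbel_setT : @gumbel_law R setT = 1.
Proof.
rewrite -(bigcup_itvT false false).
pose lsf := @gumbel_law R.
pose f := @gumbel_cdf R.
pose I n : set R := `](- (n%:R))%R, (n%:R)%R]%classic.
have : (lsf \o I) n @[n --> \oo] --> 1%E.
  have -> : lsf \o I = (fun n => (f n%:R)%:E - (f (- n%:R))%:E)%E.
    apply/funext=> n; rewrite /= /lsf/= /gumbel_law /lebesgue_stieltjes_measure.
    rewrite /measure_extension measurable_mu_extE/=; last exact: is_ocitv.
    by rewrite wlength_itv_bnd// ge0_cp.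
  rewrite -(sube0 1); apply: cvgeB => //.
  - by apply/cvg_EFin; [near=> F
                       |exact/(cvg_comp _ _ (@cvgr_idn R))/gumbel_cvgy].
  - apply/cvg_EFin; [by near=> F|apply: (cvg_ninftyP _ _).1 => //].
      exact: gumbel_cvgNy.
    by apply: (cvg_comp _ _ (@cvgr_idn R)); rewrite ninfty.
have : (lsf \o I) n @[n --> \oo] --> lsf (\bigcup_n I n).
  apply: nondecreasing_cvg_mu; rewrite /I//; first exact: bigcup_measurable.
  by move=> *; apply/subsetPset/subset_itv; rewrite leBSide/= ?lerN2 ler_nat.
exact: cvg_unique.
Unshelve. all: end_near. Qed.
Lemma gumbel_itv (a b : R) : (a <= b)%R ->
  @gumbel_law R `]a, b]%classic = (gumbel_cdf b - gumbel_cdf a)%:E.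
Proof.
move=> ab; rewrite /gumbel_law /lebesgue_stieltjes_measure.
rewrite /measure_extension measurable_mu_extE/=; last exact: is_ocitv.
by rewrite wlength_itv_bnd.
Qed.

Lemma gumbel_Nyb (b : R) : @gumbel_law R `]-oo, b]%classic = (gumbel_cdf b)%:E.
Proof.
pose I n : set R := `](b - n%:R)%R, b]%classic.
have -> : `]-oo, b]%classic = \bigcup_n I n.
  apply/seteqP; split => x /=; last by case=> n _; rewrite /I /= !in_itv /= => /andP[].
  rewrite in_itv /= => xb; exists (Num.bound (b - x)).+1 => //.
  rewrite /I /= in_itv /= xb andbT ltrBlDr -ltrBlDl.
  apply: lt_le_trans (archi_boundP _) _; first by rewrite subr_ge0.
  by rewrite ler_nat.
have h1 : (@gumbel_law R \o I) n @[n --> \oo] --> (gumbel_cdf b)%:E.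
  have -> : @gumbel_law R \o I = (fun n => (gumbel_cdf b - gumbel_cdf (b - n%:R))%:E).
    apply/funext => n /=; rewrite gumbel_itv // lerBlDr lerDl //.
  apply/cvg_EFin; first by near=> n.
  rewrite -[X in _ --> X]subr0; apply: cvgB; first exact: cvg_cst.
  have h0 : (fun n:nat => (n%:R - b)%R) @ \oo --> +oo%R.
    exact: (cvg_comp _ _ (@cvgr_idn R) (cvg_addrr (-b))).
  have h1 : (fun n:nat => (b - n%:R)%R) @ \oo --> -oo%R.
    have -> : (fun n:nat => (b - n%:R)%R) = (- (fun n:nat => (n%:R - b)))%R.
      by apply/funext => n /=; rewrite opprB.
    exact/cvgNrNy.
  by have := cvg_comp _ _ h1 gumbel_cvgNy.
have h2 : (@gumbel_law R \o I) n @[n --> \oo] --> @gumbel_law R (\bigcup_n I n).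
  apply: nondecreasing_cvg_mu; rewrite /I//; first exact: bigcup_measurable.
  by move=> m k mk; apply/subsetPset/subset_itv; rewrite leBSide/= ?lerD2l ?lerN2 ?ler_nat.
exact: (cvg_unique _ h2 h1).
Unshelve. all: end_near. Qed.
Lemma gumbel_ay (a : R) : @gumbel_law R `]a, +oo[%classic = (1 - gumbel_cdf a)%:E.
Proof.
pose I n : set R := `]a, (a + n%:R)%R]%classic.
have -> : `]a, +oo[%classic = \bigcup_n I n.
  apply/seteqP; split => x /=; last by case=> n _; rewrite /I /= !in_itv /= => /andP[] ->.
  rewrite in_itv /= andbT => xa; exists (Num.bound (x - a)).+1 => //.
  rewrite /I /= in_itv /= xa /= -lerBlDl.
  apply: le_trans (ltW (archi_boundP _)) _; first by rewrite subr_ge0 ltW.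
  by rewrite ler_nat.
have h1 : (@gumbel_law R \o I) n @[n --> \oo] --> (1 - gumbel_cdf a)%:E.
  have -> : @gumbel_law R \o I = (fun n => (gumbel_cdf (a + n%:R) - gumbel_cdf a)%:E).
    apply/funext => n /=; rewrite gumbel_itv // lerDl //.
  apply/cvg_EFin; first by near=> n.
  apply: cvgB; last exact: cvg_cst.
  have h0 : (fun n:nat => (a + n%:R)%R) @ \oo --> +oo%R.
    exact: (cvg_comp _ _ (@cvgr_idn R) (cvg_addrl a)).
  by have := cvg_comp _ _ h0 gumbel_cvgy.
have h2 : (@gumbel_law R \o I) n @[n --> \oo] --> @gumbel_law R (\bigcup_n I n).
  apply: nondecreasing_cvg_mu; rewrite /I//; first exact: bigcup_measurable.
  by move=> m k mk; apply/subsetPset/subset_itv; rewrite leBSide/= ?lerD2l ?lerN2 ?ler_nat.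
exact: (cvg_unique _ h2 h1).
Unshelve. all: end_near. Qed.
Local Close Scope ereal_scope.
Lemma expRNn_le (k : nat) : expR (- k%:R) <= ((2:R) ^+ k)^-1 :> R.
Proof.
rewrite expRN -[k%:R]mulr1 expRM_natl.
have h2 : (2:R) <= expR 1 by have := expR_ge1Dx (1:R).
rewrite lef_pV2 ?posrE ?exprn_gt0 ?expR_gt0 //.
by rewrite lerXn2r ?nnegrE ?expR_ge0.
Qed.

Lemma cdf_low (k : nat) : gumbel_cdf (1 - k%:R) <= expR euler_gamma * ((2:R) ^+ k)^-1 :> R.
Proof.
apply: le_trans (_ : expR euler_gamma * expR (- k%:R) <= _); last first.
  by rewrite ler_wpM2l ?expR_ge0 ?expRNn_le.
rewrite /gumbel_cdf -expRD ler_expR.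
have := expR_ge1Dx (- (1 - k%:R + @euler_gamma R)).
lra.
Qed.

Lemma cdf_high (k : nat) : 1 - gumbel_cdf (k%:R - 1) <= expR (1 - euler_gamma) * ((2:R) ^+ k)^-1 :> R.
Proof.
apply: le_trans (_ : expR (1 - euler_gamma) * expR (- k%:R) <= _); last first.
  by rewrite ler_wpM2l ?expR_ge0 ?expRNn_le.
rewrite /gumbel_cdf -expRD.
have := expR_ge1Dx (- expR (- (k%:R - 1 + @euler_gamma R))).
have -> : 1 - @euler_gamma R + - k%:R = - (k%:R - 1 + euler_gamma) by ring.
lra.
Qed.
Local Open Scope ereal_scope.
Definition Bk (k : nat) : set R :=
  `]-oo, (1 - k%:R)%R[%classic `|` `](k%:R - 1)%R, +oo[%classic.

Lemma Bk_meas k : measurable (Bk k).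
Proof. by apply: measurableU; exact: measurable_itv. Qed.

Lemma Bk_bound k : @gumbel_law R (Bk k) <= ((2 * (expR euler_gamma + expR (1 - euler_gamma))) / (2 ^ (k + 1))%:R)%:E.
Proof.
apply: le_trans (measureU2 _ _ _) _; try exact: measurable_itv.
apply: le_trans (_ : @gumbel_law R `]-oo, (1 - k%:R)%R]%classic + @gumbel_law R `](k%:R - 1)%R, +oo[%classic <= _).
  apply: leeD => //; apply: le_measure; rewrite ?inE; try exact: measurable_itv.
  by move=> x /=; rewrite !in_itv /= => /ltW.
rewrite gumbel_Nyb gumbel_ay -EFinD lee_fin.
have -> : (2 * (expR euler_gamma + expR (1 - euler_gamma)) / (2 ^ (k + 1))%:R : R)%R
   = (expR euler_gamma * ((2:R) ^+ k)^-1 + expR (1 - euler_gamma) * ((2:R) ^+ k)^-1)%R.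
  rewrite natrX exprD expr1 /=.
  have h2 : (2%R:R) != 0%R by rewrite pnatr_eq0.
  by field; rewrite ?mulf_neq0 ?expf_neq0.
by apply: lerD; [exact: cdf_low | exact: cdf_high].
Qed.
Lemma abs_le_series (t : R) : (`|t|)%:E <= \sum_(k <oo) (\1_(Bk k) t)%:E.
Proof.
set N := (Num.trunc `|t|).+1.
apply: le_trans (nneseries_lim_ge N _); last by move=> *; rewrite lee_fin indicE ler0n.
rewrite (@eq_big_nat _ _ _ 0 N _ (fun _ => (1%R)%:E)); last first.
  move=> k /andP[_ kN]; rewrite indicE mem_set //.
  have hk : (k%:R <= `|t|)%R by rewrite -truncn_ge_nat // -ltnS.
  rewrite /Bk /=; rewrite !in_itv /=.
  have [t0|t0] := leP 0%R t.
    by right; move: hk; rewrite ger0_norm //; rewrite andbT => h; lra.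
  by left; move: hk; rewrite ltr0_norm //; lra.
rewrite sumEFin lee_fin sumr_const_nat subn0.
by rewrite ltW // truncnS_gt.
Qed.
Lemma gumbel_abs_fin : \int[@gumbel_law R]_(t in setT) (`|t|)%:E < +oo.
Proof.
apply: le_lt_trans (@integral_le_gen _ _ _ (@gumbel_law R) setT _ _ abs_le_series) _.
rewrite integral_nneseries //; last first.
  by move=> k; apply/measurable_EFinP; apply: measurable_indic; exact: Bk_meas.
pose r := (2 * (expR (@euler_gamma R) + expR (1 - @euler_gamma R)))%R.
apply: le_lt_trans.
  apply: (@lee_nneseries _ _ (fun k => ((r / (2 ^ (k + 1))%N%:R)%R)%:E)).
    by move=> k _ _; apply: integral_ge0 => t _; rewrite lee_fin indicE ler0n.
  move=> k _; rewrite integral_indic ?setIT; [exact: (Bk_bound k)|exact: measurableT|exact: Bk_meas].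
have := @cvg_geometric_eseries_half R r 0.
move=> /cvg_lim => h; rewrite /eseries in h.
rewrite [X in X < _]h ?ltry //.
Qed.
End S.

End Part2.
Import Part2.

Module Part4.
Import numFieldNormedType.Exports.
Import numFieldNormedType.Exports.
Local Open Scope ring_scope.
Local Open Scope classical_set_scope.
Local Open Scope ereal_scope.

Section iter.
Context {R : realType} (I : finType).

Lemma iter_mono (s : seq I) (F G : (I -> R) -> \bar R) :
  (forall g, F g <= G g) -> forall g, iter_gumbel_E s F g <= iter_gumbel_E s G g.
Proof.
elim: s F G => [|k s IH] F G FG g //=.
apply: integral_le_gen => t; exact: IH.
Qed.

Lemma iter_cst (s : seq I) (v : \bar R) g : iter_gumbel_E s (fun _ => v) g = v.
Proof.
elim: s g => [|k s IH] g //=.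
under eq_integral do rewrite IH.
rewrite (integral_cst _ measurableT v).
transitivity (v * 1); last by rewrite mule1.
by congr (_ * _); exact: gumbel_setT.
Qed.
End iter.

Section iterP.
Context {R : realType} (I : finType).
Definition Agum : R := fine (\int[@gumbel_law R]_(t in setT) (`|t|)%:E).

Lemma AgumE : \int[@gumbel_law R]_(t in setT) (`|t|)%:E = Agum%:E.
Proof.
rewrite /Agum fineK // ge0_fin_numE ?gumbel_abs_fin //.
by apply: integral_ge0 => t _; rewrite lee_fin.
Qed.

Lemma Agum_ge0 : (0 <= Agum)%R.
Proof. by rewrite /Agum fine_ge0 //; apply: integral_ge0 => t _; rewrite lee_fin. Qed.

Lemma int_aabs (a : R) : (0 <= a)%R ->
  \int[@gumbel_law R]_(t in setT) ((a + `|t|)%:E) = (a + Agum)%:E.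
Proof.
move=> a0.
under eq_integral do rewrite EFinD.
rewrite ge0_integralD //; last by apply/measurable_EFinP; exact: normr_measurable.
rewrite AgumE EFinD; congr (_ + _).
rewrite (integral_cst _ measurableT a%:E).
transitivity (a%:E * 1); last by rewrite mule1.
by congr (_ * _); exact: gumbel_setT.
Qed.

Definition Pfun (C : R) (g : I -> R) : \bar R := (C + \sum_k `|g k|)%:E.

Lemma sum_upd (s : seq I) (k : I) (t : R) (g : I -> R) : k \notin s ->
  (\sum_(j | j \notin s) `|(fun i => if i == k then t else g i) j| =
   `|t| + \sum_(j | j \notin k :: s) `|g j|)%R.
Proof.
move=> ks; rewrite (bigD1 k) //= eqxx; congr (_ + _)%R.
apply: eq_big => j; first by rewrite in_cons negb_or andbC.
by case/andP=> _ /negbTE ->.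
Qed.

Lemma iter_P (C : R) : (0 <= C)%R -> forall s : seq I, uniq s -> forall g,
  iter_gumbel_E s (Pfun C) g =
    (C + \sum_(k | k \notin s) `|g k| + (size s)%:R * Agum)%:E /\
  iter_gumbel_E s (fun g => - Pfun C g) g =
    - (C + \sum_(k | k \notin s) `|g k| + (size s)%:R * Agum)%:E.
Proof.
move=> C0; elim => [|k s IH] /=.
  move=> _ g; rewrite mul0r addr0; split; congr (_%:E); rewrite /Pfun; congr (_ + _)%R;
  by apply: eq_bigl => j.
move=> /andP[ks us] g.
have ha : forall t, iter_gumbel_E s (Pfun C) (fun i => if i == k then t else g i) =
   ((C + \sum_(j | j \notin k :: s) `|g j| + (size s)%:R * Agum) + `|t|)%:E.
  move=> t; rewrite (IH us _).1 sum_upd //; congr (_%:E); ring.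
have hb : forall t, iter_gumbel_E s (fun g => - Pfun C g) (fun i => if i == k then t else g i) =
   - ((C + \sum_(j | j \notin k :: s) `|g j| + (size s)%:R * Agum) + `|t|)%:E.
  move=> t; rewrite (IH us _).2 sum_upd //; congr (- _%:E); ring.
have hpos : (0 <= C + \sum_(j | j \notin k :: s) `|g j| + (size s)%:R * Agum)%R.
  by rewrite addr_ge0 ?mulr_ge0 ?Agum_ge0 // addr_ge0 // sumr_ge0.
split.
  under eq_integral do rewrite ha.
  rewrite int_aabs //; congr (_%:E).
  rewrite -addn1 natrD; ring.
under eq_integral do rewrite hb.
rewrite integral_ge0N; last by move=> t _; rewrite lee_fin addr_ge0.
rewrite int_aabs //; congr (- _%:E).
rewrite -addn1 natrD; ring.
Qed.
End iterP.

End Part4.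
Import Part4.

Module Part5.
Import numFieldNormedType.Exports.
Import numFieldNormedType.Exports.
Local Open Scope ring_scope.

Section main.
Context {R : realType} (n : nat) (X : 'I_n -> finType) (theta : prodX X -> \bar R).
Hypothesis htheta : forall x, theta x != +oo%E.

Lemma sum_sub_abs (y : prodX X) (m : nat) (g : gidx X -> R) :
  `|\sum_(i : 'I_n | (m <= i)%N) g (Tagged X (y i))| <= \sum_k `|g k|.
Proof.
apply: le_trans (ler_norm_sum _ _ _) _.
apply: le_trans (_ : \sum_(i : 'I_n) `|g (Tagged X (y i))| <= _).
  rewrite [X in _ <= X](bigID (fun i : 'I_n => (m <= i)%N)) /= lerDl.
  by apply: sumr_ge0.
have inj : {in [set: 'I_n] &, injective (fun i => Tagged X (y i) : gidx X)}.
  by move=> i j _ _ /(congr1 tag).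
rewrite (_ : \sum_(i : 'I_n) _ = \sum_(i in [set: 'I_n]) `|g (Tagged X (y i))|); last first.
  by apply: eq_bigl => i; rewrite inE.
rewrite -(big_imset (fun k => `|g k|) inj) /=.
rewrite [X in _ <= X](bigID (fun k => k \in [set Tagged X (y i) | i in [set: 'I_n]])) /= lerDl.
by apply: sumr_ge0.
Qed.
Local Open Scope ereal_scope.
Definition Fmax (x : prodX X) (m : nat) (g : gidx X -> R) : \bar R :=
  \big[maxe/-oo]_(y : prodX X | [forall i : 'I_n, (i < m)%N ==> (y i == x i)])
      (theta y + (\sum_(i : 'I_n | (m <= i)%N) (g (Tagged X (y i)))%:E)).

Lemma MpertE x m : Mpert theta x m = iter_gumbel_E (enum (gidx X : finType)) (Fmax x m) (fun _ => 0%R).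
Proof. by []. Qed.

Definition Cb : R := (\sum_y `|fine (theta y)|)%R.

Lemma Cb_ge0 : (0 <= Cb)%R.
Proof. by apply: sumr_ge0. Qed.

Lemma abs_theta_le y r : theta y = r%:E -> (`|r| <= Cb)%R.
Proof.
move=> E; rewrite /Cb (bigD1 y) //= E /= lerDl.
by apply: sumr_ge0.
Qed.

Lemma theta_le y : theta y <= Cb%:E.
Proof.
have := htheta y; case E: (theta y) => [r| |] // _.
  rewrite lee_fin; have := abs_theta_le _ _ E; have := ler_norm r; lra.
exact: leNye.
Qed.

Lemma Fmax_le x m g : Fmax x m g <= Pfun (gidx X) Cb g.
Proof.
apply: bigmax_le; first exact: leNye.
move=> y _; rewrite /Pfun EFinD; apply: leeD; first exact: theta_le.
rewrite sumEFin lee_fin; apply: le_trans (ler_norm _) (sum_sub_abs _ _ _).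
Qed.

Lemma Fmax_ge x r m g : theta x = r%:E -> - Pfun (gidx X) Cb g <= Fmax x m g.
Proof.
move=> hx.
have Px : [forall i : 'I_n, (i < m)%N ==> (x i == x i)].
  by apply/forallP => i; rewrite eqxx implybT.
apply: le_trans (le_bigmax_cond _ _ Px); rewrite hx sumEFin -EFinD /Pfun lee_fin.
have h1 := abs_theta_le _ _ hx.
have h2 := sum_sub_abs x m g.
move: h1 h2; rewrite !ler_norml => /andP[h1 h1'] /andP[h2 h2'].
lra.
Qed.

Lemma Mpert_fin x r m : theta x = r%:E -> Mpert theta x m \is a fin_num.
Proof.
move=> hx; rewrite MpertE.
have [hP hN] := iter_P (gidx X : finType) Cb Cb_ge0 _ (enum_uniq (gidx X : finType)) (fun _ => 0%R).
have up := iter_mono (gidx X : finType) (enum (gidx X : finType)) _ _ (Fmax_le x m) (fun _ => 0%R).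
have lo := iter_mono (gidx X : finType) (enum (gidx X : finType)) _ _ (fun g => Fmax_ge x r m g hx) (fun _ => 0%R).
rewrite hP in up; rewrite hN in lo.
rewrite fin_numE; apply/andP; split.
  by rewrite gt_eqF // (lt_le_trans _ lo) // ltNyr.
by rewrite lt_eqF // (le_lt_trans up) // ltry.
Qed.
Lemma Mpert_top x m : (n <= m)%N -> Mpert theta x m = theta x.
Proof.
move=> hm; rewrite MpertE.
have -> : Fmax x m = fun _ => theta x.
  apply/funext => g; rewrite /Fmax (eq_bigl (pred1 x)) ?big_pred1_eq.
    by rewrite big_pred0 ?adde0 // => i; rewrite leqNgt (leq_trans (ltn_ord i) hm).
  move=> y /=; apply/forallP/eqP => [h|->]; last by move=> i; rewrite eqxx implybT.
  apply/ffunP => i; apply/eqP; have := h i; by rewrite (leq_trans (ltn_ord i) hm).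
exact: iter_cst.
Qed.

Lemma Mpert0 x x' : Mpert theta x 0 = Mpert theta x' 0.
Proof.
rewrite !MpertE; congr iter_gumbel_E; apply/funext => g; rewrite /Fmax.
Qed.
End main.


End Part5.
Import Part5.

Local Open Scope ring_scope.

Theorem theorem3 (R : realType) (n : nat) (X : 'I_n -> finType)
    (theta : prodX X -> \bar R)
    (htheta : forall x, theta x != +oo%E)
    (hZ : 0 < Zpart theta) :
  forall x : prodX X, cond_output_prob theta x = gibbs theta x.
Proof.
have [x0 hx0] : exists x0, theta x0 != -oo%E.
  case: (pselect (exists x0, theta x0 != -oo%E)) => // hne; exfalso.
  move: hZ; rewrite /Zpart big1 ?ltxx // => y _.
  have h : theta y == -oo%E by apply/negPn/negP => h; apply: hne; exists y.
  by rewrite /expE (eqP h).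
have [r0 hr0] : exists r0, theta x0 = r0%:E.
  by case E: (theta x0) (htheta x0) hx0 => [r| |] //; exists r.
pose K := expE (Mpert theta x0 0).
have finE : forall e : \bar R, e \is a fin_num -> expE e = expR (fine e).
  by move=> e /fineK <-.
have K0 : 0 < K by rewrite /K finE ?expR_gt0 // (Mpert_fin _ _ _ htheta _ _ _ hr0).
have pass : forall x, pass_prob theta x = expE (theta x) / K.
  move=> x; have [n0|npos] := posnP n.
    have hx : Mpert theta x 0 = theta x by rewrite Mpert_top // n0.
    have hxK : K = expE (theta x) by rewrite /K (Mpert0 _ _ _ x0 x) hx.
    rewrite /pass_prob big1; last by move=> j; have := ltn_ord j; rewrite {2}n0.
    by rewrite -hxK divff // gt_eqF.
  case E: (theta x) (htheta x) => [r| |] // _.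
    have fx : forall m, Mpert theta x m \is a fin_num by move=> m; exact: (Mpert_fin _ _ _ htheta _ _ _ E).
    rewrite /pass_prob -(big_mkord xpredT (fun j => pstep theta x j)) /pstep.
    rewrite (telescope_prodf (f := fun j => expE (Mpert theta x j))) //; last first.
      by move=> k _; rewrite finE ?fx // gt_eqF // expR_gt0.
    by rewrite Mpert_top // E /K (Mpert0 _ _ _ x0 x).
  rewrite /expE /= mul0r; apply/eqP/prodf_eq0.
  have hn : (n.-1 < n)%N by rewrite prednK.
  exists (Ordinal hn) => //=; rewrite /pstep prednK // Mpert_top // E /expE /=.
  by rewrite mul0r.
have Zacc : accept_prob theta = Zpart theta / K.
  by rewrite /accept_prob (eq_bigr _ (fun y _ => pass y)) -mulr_suml.
move=> x; rewrite /cond_output_prob pass Zacc /gibbs.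
have K0' : K != 0 by rewrite gt_eqF.
have Z0' : Zpart theta != 0 by rewrite gt_eqF.
by rewrite invf_div mulrA divfK.
Qed.
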